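(* Let $\Sigma\in\mathbb{R}^{N\times N}$ be symmetric positive definite, $\mathcal T$ a binary tree whose leaves are the assets $1,\dots,N$, and $\gamma\in[0,1]$. For all $\mu\in\mathbb{R}^N$ outside a Lebesgue-measure-zero subset of $\mathbb{R}^N$, the aggregate signal $s_n$ computed by the HRP-$\Sigma\mu$ algorithm is nonzero at every internal node $n$ of $\mathcal T$. In particular, the $L^1$ denominator $|\alpha_L^{\mathrm{raw}}|+|\alpha_R^{\mathrm{raw}}|$ is strictly positive at every internal node and the algorithm is well defined.
   Context: HRP-$\Sigma\mu$ algorithm (inputs $\Sigma,\mu,\mathcal T,\gamma$), defined recursively. At a leaf (asset $i$) return $\hat w=(1)$, $v=\Sigma_{ii}$, $s=\mu_i$. At an internal node $n$ with left and right subtrees having leaf index sets $L,R$: recursively obtain $(\hat w_L,v_L,s_L)$ and $(\hat w_R,v_R,s_R)$; set $c=\hat w_L^\top\Sigma_{LR}\hat w_R$, $\Delta=v_Lv_R-\gamma^2c^2$, $\alpha_L^{\mathrm{raw}}=(v_Rs_L-\gamma cs_R)/\Delta$, $\alpha_R^{\mathrm{raw}}=(v_Ls_R-\gamma cs_L)/\Delta$, $Z=|\alpha_L^{\mathrm{raw}}|+|\alpha_R^{\mathrm{raw}}|$, $\alpha_k=\alpha_k^{\mathrm{raw}}/Z$; the node representative is the stacked vector $\hat w_n=(\alpha_L\hat w_L,\alpha_R\hat w_R)\in\mathbb{R}^{L\cup R}$, with $v_n=\hat w_n^\top\Sigma_{nn}\hat w_n$ and $s_n=\hat w_n^\top\mu_n$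 (subscripts denote sub-blocks/subvectors on the node's index set). The output is the representative at the root. *)

(* Defs.v *)
From mathcomp Require Import all_boot all_order all_algebra.
From mathcomp Require Import reals.
Set Implicit Arguments. Unset Strict Implicit. Unset Printing Implicit Defensive.
Import Order.TTheory GRing.Theory Num.Theory.
Local Open Scope ring_scope.

(* Binary trees whose leaves are labelled by assets 'I_N (assets 1..N are
   indexed 0..N-1). *)
Inductive btree (N : nat) : Type :=
| Leaf of 'I_N
| Node of btree N & btree N.
Arguments Leaf {N}.
Arguments Node {N}.

Fixpoint leaves N (t : btree N) : seq 'I_N :=
  match t with Leaf i => [:: i] | Node l r => leaves l ++ leaves r end.

Definition tree_on_assets N (t : btree N) : Prop := perm_eq (leaves t) (enum 'I_N).

Fixpoint all_internal N (P : btree N -> Prop) (t : btree N) : Prop :=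
  match t with
  | Leaf _ => True
  | Node l r => P t /\ all_internal P l /\ all_internal P r
  end.

Definition sym_posdef (R : realFieldType) N (S : 'M[R]_N) : Prop :=
  S^T = S /\ forall x : 'cV[R]_N, x != 0 -> 0 < (x^T *m S *m x) 0 0.

Section HRP.
Variables (R : realFieldType) (N : nat) (Sigma : 'M[R]_N) (mu : 'cV[R]_N) (gamma : R).

(* Node representatives are stored as vectors of R^N supported on the node's
   leaf set (zero elsewhere); then w^T Sigma_{LR} w' etc. are the full
   quadratic/bilinear forms. *)
Definition bil (x y : 'cV[R]_N) : R := (x^T *m Sigma *m y) 0 0.
Definition dotmu (x : 'cV[R]_N) : R := (x^T *m mu) 0 0.

Definition node_c (L Rt : 'cV[R]_N * R * R) : R := bil L.1.1 Rt.1.1.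
Definition node_Delta (L Rt : 'cV[R]_N * R * R) : R :=
  L.1.2 * Rt.1.2 - gamma ^+ 2 * (node_c L Rt) ^+ 2.
Definition node_alphaL_raw (L Rt : 'cV[R]_N * R * R) : R :=
  (Rt.1.2 * L.2 - gamma * node_c L Rt * Rt.2) / node_Delta L Rt.
Definition node_alphaR_raw (L Rt : 'cV[R]_N * R * R) : R :=
  (L.1.2 * Rt.2 - gamma * node_c L Rt * L.2) / node_Delta L Rt.
Definition node_Z (L Rt : 'cV[R]_N * R * R) : R :=
  `|node_alphaL_raw L Rt| + `|node_alphaR_raw L Rt|.

(* HRP-Sigma-mu: returns (w_hat, v, s).  Divisions are MathComp's total
   ones (x / 0 = 0); the theorem asserts the denominators are nonzero. *)
Fixpoint hrp (t : btree N) : 'cV[R]_N * R * R :=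
  match t with
  | Leaf i => (delta_mx i 0, Sigma i i, mu i 0)
  | Node l r =>
      let L := hrp l in let Rt := hrp r in
      let aL := node_alphaL_raw L Rt / node_Z L Rt in
      let aR := node_alphaR_raw L Rt / node_Z L Rt in
      let w := aL *: L.1.1 + aR *: Rt.1.1 in
      (w, bil w w, dotmu w)
  end.

Definition hrp_w t := (hrp t).1.1.
Definition hrp_v t := (hrp t).1.2.
Definition hrp_s t := (hrp t).2.

(* Delta and L^1 denominator Z at an internal node t (junk at leaves) *)
Definition hrp_Delta (t : btree N) : R :=
  match t with Leaf _ => 0 | Node l r => node_Delta (hrp l) (hrp r) end.
Definition hrp_Z (t : btree N) : R :=
  match t with Leaf _ => 0 | Node l r => node_Z (hrp l) (hrp r) end.
End HRP.

Definition box_vol (R : realFieldType) N (a b : 'cV[R]_N) : R :=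
  \prod_(i < N) (b i 0 - a i 0).

Definition lebesgue_null (R : realType) N (E : 'cV[R]_N -> Prop) : Prop :=
  forall eps : R, 0 < eps ->
  exists a b : nat -> 'cV[R]_N,
    (forall k i, a k i 0 <= b k i 0) /\
    (forall x, E x -> exists k, forall i, a k i 0 <= x i 0 <= b k i 0) /\
    (forall n, \sum_(k < n) box_vol (a k) (b k) <= eps).

(* Main.v *)
Require Import Defs.
From mathcomp Require Import all_boot all_order all_algebra.
From mathcomp Require Import reals.
From mathcomp Require Import ring lra.
Import Order.TTheory GRing.Theory Num.Theory.
Local Open Scope ring_scope.

Lemma bilDl (R : realFieldType) N (S : 'M[R]_N) x y z :
  bil S (x + y) z = bil S x z + bil S y z.
Proof. by rewrite /bil linearD /= !mulmxDl mxE. Qed.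
Lemma bilZl (R : realFieldType) N (S : 'M[R]_N) a x z :
  bil S (a *: x) z = a * bil S x z.
Proof. by rewrite /bil linearZ /= -!scalemxAl mxE. Qed.
Lemma bilDr (R : realFieldType) N (S : 'M[R]_N) x y z :
  bil S z (x + y) = bil S z x + bil S z y.
Proof. by rewrite /bil mulmxDr mxE. Qed.
Lemma bilZr (R : realFieldType) N (S : 'M[R]_N) a x z :
  bil S z (a *: x) = a * bil S z x.
Proof. by rewrite /bil -scalemxAr mxE. Qed.
Lemma bilC (R : realFieldType) N (S : 'M[R]_N) x y :
  S^T = S -> bil S x y = bil S y x.
Proof.
move=> hS; rewrite /bil.
have -> : (x^T *m S *m y) 0 0 = ((x^T *m S *m y)^T) 0 0 by rewrite [RHS]mxE.
by rewrite !trmx_mul hS trmxK mulmxA.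
Qed.
Lemma dotmuD (R : realFieldType) N (mu : 'cV[R]_N) x y :
  dotmu mu (x + y) = dotmu mu x + dotmu mu y.
Proof. by rewrite /dotmu linearD /= mulmxDl mxE. Qed.
Lemma dotmuZ (R : realFieldType) N (mu : 'cV[R]_N) a x :
  dotmu mu (a *: x) = a * dotmu mu x.
Proof. by rewrite /dotmu linearZ /= -scalemxAl mxE. Qed.
Lemma bil_delta (R : realFieldType) N (S : 'M[R]_N) i :
  bil S (delta_mx i 0) (delta_mx i 0) = S i i.
Proof. by rewrite /bil trmx_delta -rowE -colE !mxE. Qed.
Lemma dotmu_delta (R : realFieldType) N (mu : 'cV[R]_N) i :
  dotmu mu (delta_mx i 0) = mu i 0.
Proof. by rewrite /dotmu trmx_delta -rowE !mxE. Qed.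

Lemma nz_entry (R : realFieldType) N (x : 'cV[R]_N) :
  x != 0 -> exists j, x j 0 != 0.
Proof.
move=> hx; case: (pickP (fun j => x j 0 != 0)) => [j hj | h]; first by exists j.
case/eqP: hx; apply/matrixP => i k; rewrite (ord1 k) mxE.
by move: (h i) => /= /negbFE/eqP.
Qed.

Lemma indep (R : realFieldType) N (x y : 'cV[R]_N) (sx sy : seq 'I_N) a b :
  (forall j, j \notin sx -> x j 0 = 0) -> (forall j, j \notin sy -> y j 0 = 0) ->
  (forall j, j \in sx -> j \notin sy) -> x != 0 -> y != 0 ->
  a *: x + b *: y = 0 -> a = 0 /\ b = 0.
Proof.
move=> hx hy hd nx ny e.
have ej : forall j, a * x j 0 + b * y j 0 = 0.
  by move=> j; move/matrixP: e => /(_ j 0); rewrite !mxE.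
have [j hj] := nz_entry _ _ _ nx; have [k hk] := nz_entry _ _ _ ny.
have jx : j \in sx by apply: contraR hj => /hx ->.
have kx : k \in sy by apply: contraR hk => /hy ->.
have kn : k \notin sx by apply: contraL kx => /hd.
move: (ej j) (ej k); rewrite (hy j (hd j jx)) (hx k kn) !mulr0 addr0 add0r.
by move=> /eqP; rewrite mulf_eq0 (negbTE hj) orbF => /eqP -> /eqP;
   rewrite mulf_eq0 (negbTE hk) orbF => /eqP ->.
Qed.

Lemma inv_main (R : realFieldType) N (S : 'M[R]_N) (mu : 'cV[R]_N) gamma (t : btree N) :
  sym_posdef S -> 0 <= gamma <= 1 -> (forall i, mu i 0 != 0) -> uniq (leaves t) ->
  [/\ forall j, j \notin leaves t -> (hrp S mu gamma t).1.1 j 0 = 0,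
      (hrp S mu gamma t).1.1 != 0,
      (hrp S mu gamma t).1.2 = bil S (hrp S mu gamma t).1.1 (hrp S mu gamma t).1.1,
      (hrp S mu gamma t).2 = dotmu mu (hrp S mu gamma t).1.1 &
      (hrp S mu gamma t).2 != 0 /\
      all_internal (fun n =>
          hrp_s S mu gamma n != 0 /\
          hrp_Delta S mu gamma n != 0 /\
          0 < hrp_Z S mu gamma n) t].
Proof.
move=> [hsym hpd] /andP[g0 g1] hmu.
have pd : forall x, x != 0 -> 0 < bil S x x by move=> x /hpd.
elim: t => [i | l IHl r IHr] /= hu.
  split => //.
  - by move=> j; rewrite inE mxE => /negbTE; rewrite eq_sym => ->.
  - apply/eqP => /matrixP /(_ i 0); rewrite !mxE !eqxx /= => /eqP.
    by rewrite oner_eq0.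
  - by rewrite bil_delta.
  - by rewrite dotmu_delta.
move: hu; rewrite cat_uniq => /and3P[ul hlr ur].
have hd : forall j, j \in leaves l -> j \notin leaves r.
  by move=> j jl; apply: contra hlr => jr; apply/hasP; exists j.
move: (IHl ul) (IHr ur) => {IHl IHr}.
rewrite /hrp_s /hrp_Delta /hrp_Z /=.
case: (hrp S mu gamma l) => [[wL vL] sL]; case: (hrp S mu gamma r) => [[wR vR] sR] /=.
move=> [suL nzL -> -> [sLnz allL]] [suR nzR -> -> [sRnz allR]].
rewrite /node_Z /node_alphaL_raw /node_alphaR_raw /node_Delta /node_c /=.
have vLp : 0 < bil S wL wL by exact: pd.
have vRp : 0 < bil S wR wR by exact: pd.
have bilLR : bil S wR wL = bil S wL wR by rewrite bilC.
set vl := bil S wL wL in vLp *; set vr := bil S wR wR in vRp *.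
set c := bil S wL wR in bilLR *.
set sl := dotmu mu wL in sLnz *; set sr := dotmu mu wR in sRnz *.
have cs : 0 < vl * vr - c ^+ 2.
  have z0 : c *: wL + (- vl) *: wR != 0.
    apply/eqP => /(@indep _ _ _ _ _ _ _ _ suL suR hd nzL nzR) [_ /eqP].
    by rewrite oppr_eq0 (gt_eqF vLp).
  move: (pd _ z0); rewrite !bilDl !bilDr !bilZl !bilZr bilLR -/vl -/vr -/c => h.
  have : 0 < vl * (vl * vr - c ^+ 2) by nra.
  by rewrite pmulr_rgt0.
have Dp : 0 < vl * vr - gamma ^+ 2 * c ^+ 2.
  have : gamma ^+ 2 * c ^+ 2 <= c ^+ 2.
    rewrite -[leRHS]mul1r ler_wpM2r ?sqr_ge0 //.
    by rewrite expr_le1.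
  lra.
set D := vl * vr - gamma ^+ 2 * c ^+ 2 in Dp *.
set pL := vr * sl - gamma * c * sr; set pR := vl * sr - gamma * c * sl.
have pnz : (pL != 0) || (pR != 0).
  case: (pL =P 0) => //= h1; case: (pR =P 0) => //= h2; exfalso.
  have : D * sl = vl * pL + gamma * c * pR by rewrite /D /pL /pR; ring.
  rewrite h1 h2 mulr0 mulr0 addr0 => /eqP; rewrite mulf_eq0 (gt_eqF Dp) /=.
  by rewrite (negbTE sLnz).
have Zp : 0 < `|pL / D| + `|pR / D|.
  have h1 := normr_ge0 (pL / D); have h2 := normr_ge0 (pR / D).
  case/orP: pnz => h.
    have : 0 < `|pL / D| by rewrite normr_gt0 mulf_neq0 // invr_eq0 gt_eqF.
    lra.
  have : 0 < `|pR / D| by rewrite normr_gt0 mulf_neq0 // invr_eq0 gt_eqF.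
  lra.
set Z := `|pL / D| + `|pR / D| in Zp *.
have sp : 0 < (pL / D / Z) * sl + (pR / D / Z) * sr.
  have -> : (pL / D / Z) * sl + (pR / D / Z) * sr = 
     (vr * sl ^+ 2 - 2 * gamma * c * sl * sr + vl * sr ^+ 2) / (D * Z).
    rewrite /pL /pR; field.
    by rewrite !gt_eqF.
  apply: divr_gt0; last by rewrite mulr_gt0.
  have : vr * (vr * sl ^+ 2 - 2 * gamma * c * sl * sr + vl * sr ^+ 2) =
     (vr * sl - gamma * c * sr) ^+ 2 + D * sr ^+ 2 by rewrite /D; ring.
  have : 0 < D * sr ^+ 2 by rewrite mulr_gt0 // lt_def sqrf_eq0 sRnz sqr_ge0.
  have := sqr_ge0 (vr * sl - gamma * c * sr).
  move=> h1 h2 h3.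
  have : 0 < vr * (vr * sl ^+ 2 - 2 * gamma * c * sl * sr + vl * sr ^+ 2) by lra.
  by rewrite pmulr_rgt0.
have sE : dotmu mu ((pL / D / Z) *: wL + (pR / D / Z) *: wR) =
   (pL / D / Z) * sl + (pR / D / Z) * sr by rewrite dotmuD !dotmuZ.
rewrite sE.
split => //.
- move=> j; rewrite mem_cat negb_or => /andP [jl jr].
  by rewrite !mxE suL // suR // !mulr0 addr0.
- apply/eqP => /(@indep _ _ _ _ _ _ _ _ suL suR hd nzL nzR) [/eqP h1 /eqP h2].
  move: h1 h2; rewrite !mulf_eq0 !invr_eq0 (gt_eqF Zp) (gt_eqF Dp) !orbF.
  by move=> h1 h2; move: pnz; rewrite h1 h2.
- split; first by rewrite gt_eqF.
  split; last by split.
  split; first by rewrite gt_eqF.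
  by split; rewrite ?gt_eqF.
Qed.
Lemma geom_sum (R : realFieldType) (x : R) n : 2 * x = 1 ->
  \sum_(k < n) x ^+ k.+1 = 1 - x ^+ n.
Proof.
move=> hx; elim: n => [|n IH]; first by rewrite big_ord0 expr0 subrr.
rewrite big_ord_recr /= IH exprS.
have e : x ^+ n = 2 * (x * x ^+ n) by rewrite mulrA hx mul1r.
lra.
Qed.

Lemma null_hyper (R : realType) N : (0 < N)%N ->
  lebesgue_null (fun mu : 'cV[R]_N => exists i, mu i 0 = 0).
Proof.
move=> N0 eps eps0.
pose x : R := 2^-1.
have hx : 2 * x = 1 by rewrite /x mulfV // pnatr_eq0.
have x0 : 0 < x by rewrite /x invr_gt0.
pose ik (k : nat) : 'I_N := Ordinal (ltn_pmod k N0).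
pose M (k : nat) : R := (k %/ N)%:R.
pose P (k : nat) : R := \prod_(j < N | j != ik k) (2 * M k).
have P0 : forall k, 0 <= P k by move=> k; apply: prodr_ge0 => j _; rewrite mulr_ge0 ?ler0n.
pose d (k : nat) : R := eps * x ^+ k.+1 / (2 * (P k + 1)).
have d0 : forall k, 0 <= d k.
  move=> k; rewrite /d divr_ge0 ?mulr_ge0 ?exprn_ge0 ?ltW //.
  by have := P0 k; lra.
pose h (k : nat) (j : 'I_N) : R := if j == ik k then d k else M k.
have h0 : forall k j, 0 <= h k j by move=> k j; rewrite /h; case: ifP => _ //; rewrite ler0n.
exists (fun k => \col_j (- h k j)), (fun k => \col_j (h k j)).
split; [|split].
- by move=> k i; rewrite !mxE; have := h0 k i; lra.
- move=> y [i yi].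
  pose m := \max_(j < N) (Num.truncn `|y j ord0|).+1.
  exists (m * N + i)%N => j; rewrite !mxE.
  have ei : ik (m * N + i)%N = i.
    by apply: val_inj => /=; rewrite modnMDl modn_small.
  rewrite /h ei; case: eqP => [-> | _].
    by rewrite yi; have := d0 (m * N + i)%N; lra.
  rewrite /M divnMDl // divn_small // addn0 -ler_norml.
  apply: le_trans (ltW (truncnS_gt _)) _.
  by rewrite ler_nat (@leq_bigmax _ (fun j => (Num.truncn `|y j ord0|).+1) j).
- move=> n; apply: le_trans (_ : \sum_(k < n) eps * x ^+ k.+1 <= eps).
    apply: ler_sum => k _; rewrite /box_vol (bigD1 (ik k)) //=.
    have -> : \prod_(j < N | j != ik k) ((\col_j h k j) j 0 - (\col_j (- h k j)) j 0) = P k.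
      by apply: eq_bigr => j hj; rewrite !mxE /h (negbTE hj) opprK -mulr2n mulr_natl.
    rewrite !mxE /h eqxx opprK /d.
    have Pk := P0 k.
    have ex := exprn_gt0 k.+1 x0.
    have Ep : 0 < eps * x ^+ k.+1 by rewrite mulr_gt0.
    have -> : eps * x ^+ k.+1 / (2 * (P k + 1)) + eps * x ^+ k.+1 / (2 * (P k + 1))
        = eps * x ^+ k.+1 / (P k + 1).
      field; rewrite gt_eqF //; lra.
    rewrite mulrAC ler_pdivrMr; last by lra.
    nra.
  rewrite -mulr_sumr geom_sum //.
  have := exprn_gt0 n x0; nra.
Qed.

Theorem mainTheorem14 (R : realType) (N : nat) (Sigma : 'M[R]_N)
  (T : btree N) (gamma : R) :
  sym_posdef Sigma -> tree_on_assets T -> 0 <= gamma <= 1 ->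
  exists E : 'cV[R]_N -> Prop, lebesgue_null E /\
    forall mu : 'cV[R]_N, ~ E mu ->
      all_internal (fun n =>
          hrp_s Sigma mu gamma n != 0 /\
          hrp_Delta Sigma mu gamma n != 0 /\
          0 < hrp_Z Sigma mu gamma n) T.
Proof.
move=> hS hT hg.
have N0 : (0 < N)%N.
  by elim: T {hT} => // i; apply: leq_ltn_trans (leq0n i) (ltn_ord i).
exists (fun mu : 'cV[R]_N => exists i, mu i 0 = 0); split.
  exact: (@null_hyper R N N0).
move=> mu hmu.
have hm : forall i, mu i 0 != 0 by move=> i; apply/eqP => h; apply: hmu; exists i.
have hu : uniq (leaves T) by rewrite (perm_uniq hT) enum_uniq.
by have [_ _ _ _ []] := @inv_main _ _ _ _ _ _ hS hg hm hu.
Qed.
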